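(* Let $w, t \in \mathbb{Z}$ be such that $2w + t$ is a multiple of $4$. Then there exists a morphism $f \in \mathbb{ROT}\mathrm{ang}(\uparrow, \uparrow)$ such that $W(f) = w$ and $T(f) = t$, and such that $f$, viewed as a tangle, is related to the identity (a single straight strand) by a general isotopy, i.e.\ by planar isotopies and Reidemeister moves of types I, II and III.
   Context: $\mathbb{ROT}\mathrm{ang}$ is the free (strict) braided pivotal category generated by one object $\uparrow$, whose adjoint (left and right adjoints coincide) is denoted $\downarrow$; by Freyd–Yetter, its morphisms are oriented tangles up to regular isotopy (isotopy generated by planar isotopies and Reidemeister moves II and III, but not Reidemeister I). Strands are oriented according to whether they are labelled $\uparrow$ or $\downarrow$. The structural morphisms are four oriented caps/cups: $\mathrm{cap}_r : I \to \uparrow \otimes \downarrow$, $\mathrm{cap}_l : I \to \downarrow \otimes \uparrow$, $\mathrm{cup}_r : \downarrow \otimes \uparrow \to I$, $\mathrm{cup}_l : \uparrow \otimes \downarrow \to I$, satisfying all four yanking (zig-zag) equations. The writhe $W(f)$ of a morphism $f$ is the sum over all crossings (braidings) in its diagram of the sign of the crossing, where the braiding $\sigma$ between two strands of the same orientation counts $+1$ and its inverse $\sigma^{-1}$ counts $-1$ (the standard crossing sign of an oriented crossing). The turning number $T(f)$ is the sum over caps and cups in the diagram of their local turning numbers: $T(\mathrm{cap}_r) = +1$, $T(\mathrm{cap}_l) = -1$, $T(\mathrm{cup}_r) = -1$, $T(\mathrm{cup}_l) = +1$. Both $W$ and $T$ are invariant under the axioms of $\mathbb{ROT}\mathrm{ang}$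 and additive under composition. *)

(* Defs.v *)
(* Syntactic presentation of oriented tangle diagrams
   (morphisms of the free strict braided pivotal category ROTang generated
   by one object "up" with two-sided dual "down"), their writhe and turning
   number, and the isotopy relations (regular isotopy = axioms of a strict
   braided pivotal category; general isotopy = those plus Reidemeister I). *)
From mathcomp Require Import all_boot all_algebra.
Set Implicit Arguments. Unset Strict Implicit. Unset Printing Implicit Defensive.
Import GRing.Theory.
Local Open Scope ring_scope.

Definition obj := seq bool.
Definition up : bool := true.
Definition down : bool := false.

(* Raw diagram terms.  tcomp f g = "first f, then g" (diagrammatic order). *)
Inductive tangle : Type :=
| tid (a : obj)
| tcomp (f g : tangle)
| ttens (f g : tangle)
| tbr (x y : bool)
| tbrI (x y : bool)
| capr
| capl
| cupr
| cupl.

Inductive typed : tangle -> obj -> obj -> Prop :=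
| ty_id a : typed (tid a) a a
| ty_comp f g a b c : typed f a b -> typed g b c -> typed (tcomp f g) a c
| ty_tens f g a b c d : typed f a b -> typed g c d -> typed (ttens f g) (a ++ c) (b ++ d)
| ty_br x y : typed (tbr x y) [:: x; y] [:: y; x]
| ty_brI x y : typed (tbrI x y) [:: y; x] [:: x; y]
| ty_capr : typed capr [::] [:: up; down]
| ty_capl : typed capl [::] [:: down; up]
| ty_cupr : typed cupr [:: down; up] [::]
| ty_cupl : typed cupl [:: up; down] [::].

(* Writhe: sum of crossing signs.  A braiding of two strands of the same
   orientation counts +1; reversing one strand flips the sign; the inverse
   braiding has the opposite sign. *)
Definition cross_sign (x y : bool) : int := if x == y then 1 else -1.

Fixpoint writhe (f : tangle) : int :=
  match f with
  | tid _ => 0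
  | tcomp f g => writhe f + writhe g
  | ttens f g => writhe f + writhe g
  | tbr x y => cross_sign x y
  | tbrI x y => - cross_sign x y
  | _ => 0
  end.

Fixpoint turning (f : tangle) : int :=
  match f with
  | tcomp f g => turning f + turning g
  | ttens f g => turning f + turning g
  | capr => 1
  | capl => -1
  | cupr => -1
  | cupl => 1
  | _ => 0
  end.

(* Braiding on compound objects (defined via the hexagon identities). *)
Fixpoint braidx (x : bool) (b : obj) : tangle :=  (* x :: b -> b ++ [:: x] *)
  match b with
  | [::] => tid [:: x]
  | y :: b' => tcomp (ttens (tbr x y) (tid b')) (ttens (tid [:: y]) (braidx x b'))
  end.

Fixpoint braid (a b : obj) : tangle :=  (* a ++ b -> b ++ a *)
  match a with
  | [::] => tid b
  | x :: a' => tcomp (ttens (tid [:: x]) (braid a' b)) (ttens (braidx x b) (tid a'))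
  end.

Definition dual (a : obj) : obj := rev (map negb a).

(* "R" duality: coev : I -> x x*, ev : x* x -> I *)
Definition coevR (x : bool) := if x then capr else capl.
Definition evR (x : bool) := if x then cupr else cupl.
(* "L" duality: coev : I -> x* x, ev : x x* -> I *)
Definition coevL (x : bool) := if x then capl else capr.
Definition evL (x : bool) := if x then cupl else cupr.

Fixpoint coevRs (a : obj) : tangle :=  (* I -> a ++ dual a *)
  match a with
  | [::] => tid [::]
  | x :: a' => tcomp (coevR x) (ttens (tid [:: x]) (ttens (coevRs a') (tid [:: negb x])))
  end.
Fixpoint evRs (a : obj) : tangle :=  (* dual a ++ a -> I *)
  match a with
  | [::] => tid [::]
  | x :: a' => tcomp (ttens (tid (dual a')) (ttens (evR x) (tid a'))) (evRs a')
  end.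
Fixpoint coevLs (a : obj) : tangle :=  (* I -> dual a ++ a *)
  match a with
  | [::] => tid [::]
  | x :: a' => tcomp (coevLs a') (ttens (tid (dual a')) (ttens (coevL x) (tid a')))
  end.
Fixpoint evLs (a : obj) : tangle :=  (* a ++ dual a -> I *)
  match a with
  | [::] => tid [::]
  | x :: a' => tcomp (ttens (tid [:: x]) (ttens (evLs a') (tid [:: negb x]))) (evL x)
  end.

(* The two mates (duals) of f : a -> b, both of type dual b -> dual a. *)
Definition mateR (a b : obj) (f : tangle) : tangle :=
  tcomp (ttens (tid (dual b)) (coevRs a))
    (tcomp (ttens (tid (dual b)) (ttens f (tid (dual a))))
           (ttens (evRs b) (tid (dual a)))).
Definition mateL (a b : obj) (f : tangle) : tangle :=
  tcomp (ttens (coevLs a) (tid (dual b)))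
    (tcomp (ttens (tid (dual a)) (ttens f (tid (dual b))))
           (ttens (tid (dual a)) (evLs b))).

Inductive ax_reg : tangle -> tangle -> Prop :=
| ax_assoc f g h a b c d : typed f a b -> typed g b c -> typed h c d ->
    ax_reg (tcomp (tcomp f g) h) (tcomp f (tcomp g h))
| ax_idl f a b : typed f a b -> ax_reg (tcomp (tid a) f) f
| ax_idr f a b : typed f a b -> ax_reg (tcomp f (tid b)) f
| ax_tassoc f g h a b c d e k : typed f a b -> typed g c d -> typed h e k ->
    ax_reg (ttens (ttens f g) h) (ttens f (ttens g h))
| ax_tunitl f a b : typed f a b -> ax_reg (ttens (tid [::]) f) f
| ax_tunitr f a b : typed f a b -> ax_reg (ttens f (tid [::])) f
| ax_tid a b : ax_reg (ttens (tid a) (tid b)) (tid (a ++ b))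
| ax_interchange f g f' g' a b c a' b' c' :
    typed f a b -> typed g b c -> typed f' a' b' -> typed g' b' c' ->
    ax_reg (ttens (tcomp f g) (tcomp f' g')) (tcomp (ttens f f') (ttens g g'))
| ax_brinv1 x y : ax_reg (tcomp (tbr x y) (tbrI x y)) (tid [:: x; y])
| ax_brinv2 x y : ax_reg (tcomp (tbrI x y) (tbr x y)) (tid [:: y; x])
| ax_natl f a a' b : typed f a a' ->
    ax_reg (tcomp (ttens f (tid b)) (braid a' b)) (tcomp (braid a b) (ttens (tid b) f))
| ax_natr g a b b' : typed g b b' ->
    ax_reg (tcomp (ttens (tid a) g) (braid a b')) (tcomp (braid a b) (ttens g (tid a)))
| ax_zzR1 x : ax_reg (tcomp (ttens (coevR x) (tid [:: x])) (ttens (tid [:: x]) (evR x))) (tid [:: x])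
| ax_zzR2 x : ax_reg (tcomp (ttens (tid [:: negb x]) (coevR x)) (ttens (evR x) (tid [:: negb x])))
                     (tid [:: negb x])
| ax_zzL1 x : ax_reg (tcomp (ttens (tid [:: x]) (coevL x)) (ttens (evL x) (tid [:: x]))) (tid [:: x])
| ax_zzL2 x : ax_reg (tcomp (ttens (coevL x) (tid [:: negb x])) (ttens (tid [:: negb x]) (evL x)))
                     (tid [:: negb x])
| ax_pivotal f a b : typed f a b -> ax_reg (mateR a b f) (mateL a b f).

Inductive ax_R1 : tangle -> tangle -> Prop :=
| r1_right x c : c = tbr x x \/ c = tbrI x x ->
    ax_R1 (tcomp (ttens (tid [:: x]) (coevR x))
            (tcomp (ttens c (tid [:: negb x])) (ttens (tid [:: x]) (evL x)))) (tid [:: x])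
| r1_left x c : c = tbr x x \/ c = tbrI x x ->
    ax_R1 (tcomp (ttens (coevL x) (tid [:: x]))
            (tcomp (ttens (tid [:: negb x]) c) (ttens (evR x) (tid [:: x])))) (tid [:: x]).

Inductive cong_closure (R : tangle -> tangle -> Prop) : tangle -> tangle -> Prop :=
| cc_ax f g : R f g -> cong_closure R f g
| cc_refl f : cong_closure R f f
| cc_sym f g : cong_closure R f g -> cong_closure R g f
| cc_trans f g h : cong_closure R f g -> cong_closure R g h -> cong_closure R f h
| cc_comp f f' g g' : cong_closure R f f' -> cong_closure R g g' ->
    cong_closure R (tcomp f g) (tcomp f' g')
| cc_tens f f' g g' : cong_closure R f f' -> cong_closure R g g' ->
    cong_closure R (ttens f g) (ttens f' g').

(* Regular isotopy: equality of morphisms in ROTang. *)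
Definition reg_iso := cong_closure ax_reg.
(* General isotopy: planar isotopy + Reidemeister I, II, III. *)
Definition gen_iso := cong_closure (fun f g => ax_reg f g \/ ax_R1 f g).

(* Main.v *)
Require Import Defs.
From mathcomp Require Import all_boot all_algebra.
From mathcomp Require Import zify ring.
Import GRing.Theory.
Local Open Scope ring_scope.

Definition curlR (c : tangle) : tangle :=
  tcomp (ttens (tid [:: up]) (coevR up))
    (tcomp (ttens c (tid [:: negb up])) (ttens (tid [:: up]) (evL up))).
Definition curlL (c : tangle) : tangle :=
  tcomp (ttens (coevL up) (tid [:: up]))
    (tcomp (ttens (tid [:: negb up]) c) (ttens (evR up) (tid [:: up]))).

Definition A := curlR (tbr up up).   (* (1,2) *)
Definition A' := curlL (tbrI up up). (* (-1,-2) *)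
Definition B := curlL (tbr up up).   (* (1,-2) *)
Definition B' := curlR (tbrI up up). (* (-1,2) *)

Lemma ty_curlR c : (c = tbr up up \/ c = tbrI up up) -> typed (curlR c) [:: up] [:: up].
Proof.
move=> Hc.
have Tc : typed c [:: up; up] [:: up; up] by case: Hc => ->; constructor.
apply: (@ty_comp _ _ _ [:: up; up; down]).
  exact: (@ty_tens _ _ [:: up] [:: up] [::] [:: up; down]) (ty_id _) ty_capr.
apply: (@ty_comp _ _ _ [:: up; up; down]).
  exact: (@ty_tens _ _ [:: up; up] [:: up; up] [:: down] [:: down]) Tc (ty_id _).
exact: (@ty_tens _ _ [:: up] [:: up] [:: up; down] [::]) (ty_id _) ty_cupl.
Qed.

Lemma ty_curlL c : (c = tbr up up \/ c = tbrI up up) -> typed (curlL c) [:: up] [:: up].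
Proof.
move=> Hc.
have Tc : typed c [:: up; up] [:: up; up] by case: Hc => ->; constructor.
apply: (@ty_comp _ _ _ [:: down; up; up]).
  exact: (@ty_tens _ _ [::] [:: down; up] [:: up] [:: up]) ty_capl (ty_id _).
apply: (@ty_comp _ _ _ [:: down; up; up]).
  exact: (@ty_tens _ _ [:: down] [:: down] [:: up; up] [:: up; up]) (ty_id _) Tc.
exact: (@ty_tens _ _ [:: down; up] [::] [:: up] [:: up]) ty_cupr (ty_id _).
Qed.

Lemma iso_curlR c : (c = tbr up up \/ c = tbrI up up) -> gen_iso (curlR c) (tid [:: up]).
Proof. by move=> Hc; apply: cc_ax; right; apply: r1_right. Qed.
Lemma iso_curlL c : (c = tbr up up \/ c = tbrI up up) -> gen_iso (curlL c) (tid [:: up]).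
Proof. by move=> Hc; apply: cc_ax; right; apply: r1_left. Qed.

Fixpoint rep (n : nat) (c : tangle) : tangle :=
  match n with 0%N => tid [:: up] | n'.+1 => tcomp c (rep n' c) end.

Lemma rep_ok n c : typed c [:: up] [:: up] -> gen_iso c (tid [:: up]) ->
  typed (rep n c) [:: up] [:: up] /\ gen_iso (rep n c) (tid [:: up]) /\
  writhe (rep n c) = writhe c *+ n /\ turning (rep n c) = turning c *+ n.
Proof.
move=> Tc Ic; elim: n => [|n [T [I [W U]]]] /=.
  by split; [constructor | split; [apply: cc_refl | split]].
split; first exact: ty_comp Tc T.
split.
  apply: cc_trans (cc_comp Ic I) _.
  by apply: cc_ax; left; apply: (@ax_idl _ [:: up] [:: up]); constructor.
by rewrite W U !mulrS.
Qed.

Definition zrep (a : int) (cp cn : tangle) : tangle :=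
  match a with Posz n => rep n cp | Negz n => rep n.+1 cn end.

Lemma zrep_ok a cp cn :
  typed cp [:: up] [:: up] -> gen_iso cp (tid [:: up]) ->
  typed cn [:: up] [:: up] -> gen_iso cn (tid [:: up]) ->
  writhe cn = - writhe cp -> turning cn = - turning cp ->
  typed (zrep a cp cn) [:: up] [:: up] /\ gen_iso (zrep a cp cn) (tid [:: up]) /\
  writhe (zrep a cp cn) = a * writhe cp /\ turning (zrep a cp cn) = a * turning cp.
Proof.
move=> Tp Ip Tn In Wn Un; case: a => n; rewrite /zrep.
  have [T [I [W U]]] := rep_ok n cp Tp Ip.
  split => //; split => //; rewrite W U; by split; rewrite -mulr_natl natz.
have [T [I [W U]]] := rep_ok n.+1 cn Tn In.
split => //; split => //; rewrite W U Wn Un NegzE; split; rewrite -mulr_natl natz; ring.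
Qed.

Theorem mainTheorem1 (w t : int) :
  (4 %| 2 * w + t)%Z ->
  exists f : tangle,
    typed f [:: up] [:: up] /\ writhe f = w /\ turning f = t /\
    gen_iso f (tid [:: up]).
Proof.
move=> /dvdzP [k Hk].
have HA := zrep_ok k _ _ (ty_curlR (tbr up up) (or_introl erefl)) (iso_curlR (tbr up up) (or_introl erefl))
  (ty_curlL (tbrI up up) (or_intror erefl)) (iso_curlL (tbrI up up) (or_intror erefl)) erefl erefl.
have HB := zrep_ok (w - k) _ _ (ty_curlL (tbr up up) (or_introl erefl)) (iso_curlL (tbr up up) (or_introl erefl))
  (ty_curlR (tbrI up up) (or_intror erefl)) (iso_curlR (tbrI up up) (or_intror erefl)) erefl erefl.
case: HA => [TA [IA [WA UA]]]; case: HB => [TB [IB [WB UB]]].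
set f1 := zrep k _ _ in TA IA WA UA; set f2 := zrep (w - k) _ _ in TB IB WB UB.
exists (tcomp f1 f2).
split; first exact: ty_comp TA TB.
split.
  rewrite [writhe _]/= WA WB.
  have -> : writhe (curlR (tbr up up)) = 1 by [].
  have -> : writhe (curlL (tbr up up)) = 1 by [].
  by rewrite !mulr1 addrC subrK.
split.
  rewrite [turning _]/= UA UB.
  have -> : turning (curlR (tbr up up)) = 2 by [].
  have -> : turning (curlL (tbr up up)) = -2 by [].
  have -> : t = k * 4 - 2 * w by rewrite -Hk addrAC subrr add0r.
  ring.
apply: cc_trans (cc_comp IA IB) _.
by apply: cc_ax; left; apply: (@ax_idl _ [:: up] [:: up]); constructor.
Qed.
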